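(* Let $G=(V,E)$ be a graph and consider a routing game on $G$ with players $\pi_1,\dots,\pi_N$, player $\pi_i$ having a strategy set $\mathcal{P}_i$ of paths from $u_i$ to $v_i$, and player cost $\widetilde C_i(\mathbf{p})=\sum_{e\in p_i}2^{C_e(\mathbf{p})}$. If in routing $\mathbf{p}$ a player $\pi_i$ performs a greedy move, producing routing $\mathbf{p}'$, then $\widetilde C_E(\mathbf{p})>\widetilde C_E(\mathbf{p}')$, where $\widetilde C_E(\mathbf{q})=\sum_{e\in E}2^{C_e(\mathbf{q})}$.
   Context: A routing is $\mathbf{p}=[p_1,\dots,p_N]$ with $p_i\in\mathcal{P}_i$; $C_e(\mathbf{p})$ is the number of paths of $\mathbf{p}$ that use edge $e$. A greedy move by player $\pi_i$ in $\mathbf{p}$ is a change of its path from $p_i$ to some $p_i'\in\mathcal{P}_i$ such that $\widetilde C_i(\mathbf{p})>\widetilde C_i(p_i';\mathbf{p}_{-i})$, where $(p_i';\mathbf{p}_{-i})$ denotes the routing obtained from $\mathbf{p}$ by replacing $p_i$ with $p_i'$; the resulting routing is $\mathbf{p}'=(p_i';\mathbf{p}_{-i})$. *)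

(* Defs.v *)
From mathcomp Require Import all_boot.
Set Implicit Arguments. Unset Strict Implicit. Unset Printing Implicit Defensive.

Definition joins (V E : finType) (ends1 ends2 : E -> V) (e : E) (x y : V) : bool :=
  ((ends1 e == x) && (ends2 e == y)) || ((ends1 e == y) && (ends2 e == x)).

(* p : seq E is a (simple) path from u to v: there is a duplicate-free vertex
   sequence u = x_0, x_1, ..., x_k = v (k = size p) such that the j-th edge
   of p joins x_j and x_(j+1). *)
Definition is_path (V E : finType) (ends1 ends2 : E -> V) (u v : V) (p : seq E) : Prop :=
  exists xs : seq V,
    [/\ size xs = (size p).+1, head u xs = u, last u xs = v, uniq xs &
        all (fun t : E * (V * V) => joins ends1 ends2 t.1 t.2.1 t.2.2)
            (zip p (zip xs (behead xs)))].

Definition routing (E : finType) (N : nat) := 'I_N -> seq E.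

Definition load (E : finType) (N : nat) (p : routing E N) (e : E) : nat :=
  #|[set i : 'I_N | e \in p i]|.

Definition player_cost (E : finType) (N : nat) (p : routing E N) (i : 'I_N) : nat :=
  \sum_(e : E | e \in p i) 2 ^ load p e.

Definition global_cost (E : finType) (N : nat) (p : routing E N) : nat :=
  \sum_(e : E) 2 ^ load p e.

Definition update (E : finType) (N : nat) (p : routing E N) (i : 'I_N) (q : seq E)
  : routing E N := fun j => if j == i then q else p j.

(* Main.v *)
Require Import Defs.
From mathcomp Require Import all_boot.

Section Aux.
Context {E : finType} {N : nat} {p : routing E N} {i : 'I_N}.
Definition L (e : E) := #|[set j : 'I_N | (j != i) && (e \in p j)]|.

Lemma load_dec (r : routing E N) (Hr : forall j, j != i -> r j = p j) e :
  load r e = (e \in r i) + L e.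
Proof.
rewrite /load (cardsD1 i) inE; congr (_ + _); apply: eq_card => j.
rewrite !inE; case: eqP => [->|/eqP ne] //=; by rewrite Hr.
Qed.

Lemma glob_dec (r : routing E N) (Hr : forall j, j != i -> r j = p j) :
  global_cost r = \sum_(e : E) 2 ^ L e + \sum_(e : E | e \in r i) 2 ^ L e.
Proof.
rewrite /global_cost (bigID (fun e => e \in r i)) /=.
rewrite [X in _ = X + _](bigID (fun e => e \in r i)) /=.
have -> : \sum_(e | e \in r i) 2 ^ load r e =
          \sum_(e | e \in r i) 2 ^ L e + \sum_(e | e \in r i) 2 ^ L e.
  rewrite -big_split /=; apply: eq_bigr => e He.
  by rewrite load_dec // He expnS mul2n addnn.
have -> : \sum_(e | e \notin r i) 2 ^ load r e = \sum_(e | e \notin r i) 2 ^ L e.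
  by apply: eq_bigr => e He; rewrite load_dec // (negbTE He).
by rewrite addnAC.
Qed.

Lemma pc_dec (r : routing E N) (Hr : forall j, j != i -> r j = p j) :
  player_cost r i = 2 * \sum_(e : E | e \in r i) 2 ^ L e.
Proof.
rewrite /player_cost big_distrr /=; apply: eq_bigr => e He.
by rewrite load_dec // He expnS.
Qed.
End Aux.

Theorem lemma1 (V E : finType) (ends1 ends2 : E -> V) (N : nat)
  (u v : 'I_N -> V) (P : 'I_N -> seq E -> Prop)
  (HP : forall i q, P i q -> is_path ends1 ends2 (u i) (v i) q)
  (p : routing E N) (Hp : forall i, P i (p i))
  (i : 'I_N) (q : seq E) (Hq : P i q)
  (Hgreedy : player_cost (update p i q) i < player_cost p i) :
  global_cost (update p i q) < global_cost p.
Proof.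
have H1 : forall j, j != i -> update p i q j = p j.
  by move=> j /negbTE nj; rewrite /update nj.
have H2 : forall j, j != i -> p j = p j by [].
move: Hgreedy; rewrite (pc_dec _ H1) (pc_dec _ H2) (glob_dec _ H1) (glob_dec _ H2).
by rewrite ltn_pmul2l // ltn_add2l.
Qed.
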